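(* Let $F$ be a safe sentence, let $I$ be an interpretation of the object and predicate constants occurring in $F$, and let $X$ be any superset of the universe of $I$. Then the extension of $I$ to $X$ is a stable model of $F$ if and only if $I$ is a stable model of $F$.
   Context: Formulas are first-order formulas over a signature with object constants, predicate constants and equality, but no function constants of arity $>0$. Primitive connectives are $\bot,\land,\lor,\rightarrow$, quantifiers $\forall,\exists$; $\neg G$ is $G\rightarrow\bot$, $\top$ is $\bot\rightarrow\bot$, $G\leftrightarrow H$ is $(G\rightarrow H)\land(H\rightarrow G)$. A sentence is a formula without free variables. Stable models: for a sentence $F$, let $\mathbf p=p_1,\dots,p_n$ be all predicate constants occurring in $F$ and $\mathbf u=u_1,\dots,u_n$ distinct predicate variables with matching arities. $\mathbf u\le\mathbf p$ is $\bigwedge_i\forall\mathbf x(u_i(\mathbf x)\rightarrow p_i(\mathbf x))$, $\mathbf u=\mathbf p$ is $\bigwedge_i\forall\mathbf x(u_i(\mathbf x)\leftrightarrow p_i(\mathbf x))$, $\mathbf u<\mathbf p$ is $(\mathbf u\le\mathbf p)\land\neg(\mathbf u=\mathbf p)$. $F^*(\mathbf u)$: $p_i(\mathbf t)^*=u_i(\mathbf t)$; $(t_1=t_2)^*=(t_1=t_2)$; $\bot^*=\bot$; $(G\land H)^*=G^*\land H^*$; $(G\lor H)^*=G^*\lor H^*$; $(G\rightarrow H)^*=(G^*\rightarrow H^* )\land(G\rightarrow H)$; $(\forall xG)^*=\forall xG^*$; $(\exists xG)^*=\exists xG^*$. $\mathrm{SM}[F]$ is $F\land\neg\exists\mathbf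 u((\mathbf u<\mathbf p)\land F^*(\mathbf u))$. An interpretation of the object and predicate constants occurring in $F$ is a stable model of $F$ if it satisfies $\mathrm{SM}[F]$. Extension: if $I$ is an interpretation of a set of object and predicate constants and $X$ is a superset of the universe of $I$, the extension of $I$ to $X$ is the interpretation of the same constants with universe $X$ in which each object constant denotes the same object as in $I$ and each predicate constant denotes the same set of tuples as in $I$. Restricted variables: for quantifier-free $G$, $\mathrm{RV}(G)$ is: $\emptyset$ if $G$ is an equality between two variables; the set of variables of $G$ if $G$ is any other atomic formula; $\mathrm{RV}(\bot)=\emptyset$; $\mathrm{RV}(G\land H)=\mathrm{RV}(G)\cup\mathrm{RV}(H)$; $\mathrm{RV}(G\lor H)=\mathrm{RV}(G)\cap\mathrm{RV}(H)$; $\mathrm{RV}(G\rightarrow H)=\emptyset$. An occurrence of a subformula or variable is positive if the number of implications containing it in their antecedent is even, negative otherwise, and strictly positive if it is in the antecedent of no implication. A prenex sentence $Q_1x_1\cdots Q_nx_nM$ ($M$ quantifier-free, $x_i$ distinct) is semi-safe if every strictly positive occurrence of every $x_i$ in $M$ belongs to a subformula $G\rightarrow H$ with $x_i\in\mathrm{RV}(G)$. Simplification transformations: $\neg\bot\mapsto\top$, $\neg\top\mapsto\bot$; $\bot\land G\mapsto\bot$, $G\land\bot\mapsto\bot$, $\top\land G\mapsto G$, $G\land\top\mapsto G$; $\bot\lor G\mapsto G$, $G\lor\bot\mapsto G$, $\top\lor G\mapsto\top$, $G\lor\top\mapsto\top$; $\bot\rightarrow G\mapsto\top$, $G\rightarrow\top\mapsto\top$,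 $\top\rightarrow G\mapsto G$. A variable $x$ is positively (resp. negatively) weakly restricted in a quantifier-free formula $G$ if the formula obtained from $G$ by first replacing every atomic formula $A$ of $G$ with $x\in\mathrm{RV}(A)$ by $\bot$ and then applying the simplification transformations is $\top$ (resp. $\bot$). A semi-safe prenex sentence $Q_1x_1\cdots Q_nx_nM$ is safe if for every occurrence of every variable $x_i$: (a) if $Q_i=\forall$, the occurrence belongs to a positive subformula (of the sentence) in which $x_i$ is positively weakly restricted, or to a negative subformula in which $x_i$ is negatively weakly restricted; (b) if $Q_i=\exists$, the occurrence belongs to a negative subformula in which $x_i$ is positively weakly restricted, or to a positive subformula in which $x_i$ is negatively weakly restricted. *)

(* Defs.v *)
From Stdlib Require Import List Arith PeanoNat.
Import ListNotations.
Set Implicit Arguments.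

(** Variables and object constants are named by natural numbers.
    A predicate constant is a pair (name, arity). *)
Definition pconst := (nat * nat)%type.

Inductive term : Type :=
| TVar (x : nat)
| TCst (c : nat).

(** Predicate symbols: predicate constants, and the predicate variables
    [PVar p] (the variable u_i matching the constant p_i, same arity),
    which are only used to build F*(u). *)
Inductive psym : Type :=
| PConst (p : pconst)
| PVar (p : pconst).

Inductive quant : Type := QAll | QEx.

Inductive formula : Type :=
| FBot
| FPred (P : psym) (ts : list term)
| FEq (t1 t2 : term)
| FAnd (G H : formula)
| FOr (G H : formula)
| FImp (G H : formula)
| FQ (q : quant) (x : nat) (G : formula).

Definition FTop : formula := FImp FBot FBot.

Definition term_vars (t : term) : list nat :=
  match t with TVar x => [x] | TCst _ => [] end.

Fixpoint free_vars (F : formula) : list nat :=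
  match F with
  | FBot => []
  | FPred _ ts => flat_map term_vars ts
  | FEq t1 t2 => term_vars t1 ++ term_vars t2
  | FAnd G H | FOr G H | FImp G H => free_vars G ++ free_vars H
  | FQ _ x G => filter (fun y => negb (Nat.eqb y x)) (free_vars G)
  end.

Definition sentence (F : formula) : Prop := free_vars F = [].

Fixpoint wf_formula (F : formula) : Prop :=
  match F with
  | FBot => True
  | FPred (PConst p) ts => length ts = snd p
  | FPred (PVar _) _ => False
  | FEq _ _ => True
  | FAnd G H | FOr G H | FImp G H => wf_formula G /\ wf_formula H
  | FQ _ _ G => wf_formula G
  end.

Fixpoint preds (F : formula) : list pconst :=
  match F with
  | FPred (PConst p) _ => [p]
  | FAnd G H | FOr G H | FImp G H => preds G ++ preds H
  | FQ _ _ G => preds G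
  | _ => []
  end.

Fixpoint star (F : formula) : formula :=
  match F with
  | FBot => FBot
  | FPred (PConst p) ts => FPred (PVar p) ts
  | FPred (PVar p) ts => FPred (PVar p) ts
  | FEq t1 t2 => FEq t1 t2
  | FAnd G H => FAnd (star G) (star H)
  | FOr G H => FOr (star G) (star H)
  | FImp G H => FAnd (FImp (star G) (star H)) (FImp G H)
  | FQ q x G => FQ q x (star G)
  end.

(** An interpretation has as universe a subset [dom] of an ambient type [U]
    (this makes "extension to a superset X of the universe" expressible). *)
Record interp (U : Type) : Type := Interp {
  dom : U -> Prop;
  cst : nat -> U;
  rel : pconst -> list U -> Prop
}.
Arguments Interp {U}.

Definition tuple_of {U} (D : U -> Prop) (p : pconst) (xs : list U) : Prop :=
  length xs = snd p /\ Forall D xs.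

Definition wf_interp {U} (I : interp U) : Prop :=
  (exists d, dom I d) /\
  (forall c, dom I (cst I c)) /\
  (forall p xs, rel I p xs -> tuple_of (dom I) p xs).

Definition extension {U} (I : interp U) (X : U -> Prop) : interp U :=
  Interp X (cst I) (rel I).

Definition upd {U} (rho : nat -> U) (x : nat) (d : U) : nat -> U :=
  fun y => if Nat.eqb y x then d else rho y.

Definition eval_term {U} (I : interp U) (rho : nat -> U) (t : term) : U :=
  match t with TVar x => rho x | TCst c => cst I c end.

Fixpoint sat {U} (I : interp U) (u : pconst -> list U -> Prop)
    (rho : nat -> U) (F : formula) : Prop :=
  match F with
  | FBot => False
  | FPred (PConst p) ts => rel I p (map (eval_term I rho) ts)
  | FPred (PVar p) ts => u p (map (eval_term I rho) ts)
  | FEq t1 t2 => eval_term I rho t1 = eval_term I rho t2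
  | FAnd G H => sat I u rho G /\ sat I u rho H
  | FOr G H => sat I u rho G \/ sat I u rho H
  | FImp G H => sat I u rho G -> sat I u rho H
  | FQ QAll x G => forall d, dom I d -> sat I u (upd rho x d) G
  | FQ QEx x G => exists d, dom I d /\ sat I u (upd rho x d) G
  end.

Definition holds {U} (I : interp U) (u : pconst -> list U -> Prop)
    (F : formula) : Prop :=
  forall rho, (forall n, dom I (rho n)) -> sat I u rho F.

Definition u_le {U} (I : interp U) (F : formula) (u : pconst -> list U -> Prop) :=
  forall p, In p (preds F) ->
    forall xs, tuple_of (dom I) p xs -> u p xs -> rel I p xs.
Definition u_eq {U} (I : interp U) (F : formula) (u : pconst -> list U -> Prop) :=
  forall p, In p (preds F) ->
    forall xs, tuple_of (dom I) p xs -> (u p xs <-> rel I p xs).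
Definition u_lt {U} (I : interp U) (F : formula) (u : pconst -> list U -> Prop) :=
  u_le I F u /\ ~ u_eq I F u.

Definition stable_model {U} (I : interp U) (F : formula) : Prop :=
  holds I (fun _ _ => False) F /\
  ~ exists u : pconst -> list U -> Prop,
      (forall p xs, u p xs -> tuple_of (dom I) p xs) /\
      u_lt I F u /\ holds I u (star F).

Fixpoint inRV (x : nat) (G : formula) : Prop :=
  match G with
  | FBot => False
  | FEq (TVar _) (TVar _) => False
  | FEq t1 t2 => In x (term_vars t1 ++ term_vars t2)
  | FPred _ ts => In x (flat_map term_vars ts)
  | FAnd G H => inRV x G \/ inRV x H
  | FOr G H => inRV x G /\ inRV x H
  | FImp _ _ => False
  | FQ _ _ _ => False
  end.

Fixpoint qfree (F : formula) : Prop :=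
  match F with
  | FAnd G H | FOr G H | FImp G H => qfree G /\ qfree H
  | FQ _ _ _ => False
  | _ => True
  end.

Fixpoint repl (x : nat) (G : formula) : formula :=
  match G with
  | FBot => FBot
  | FPred P ts => if in_dec Nat.eq_dec x (flat_map term_vars ts) then FBot else G
  | FEq (TVar _) (TVar _) => G
  | FEq t1 t2 => if in_dec Nat.eq_dec x (term_vars t1 ++ term_vars t2) then FBot else G
  | FAnd G H => FAnd (repl x G) (repl x H)
  | FOr G H => FOr (repl x G) (repl x H)
  | FImp G H => FImp (repl x G) (repl x H)
  | FQ q y G => FQ q y (repl x G)
  end.

(** Exhaustive application of the simplification transformations
    (computed bottom-up; the result is the normal form). *)
Fixpoint simp (G : formula) : formula :=
  match G with
  | FAnd G H =>
      let a := simp G in let b := simp H in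
      match a, b with
      | FBot, _ => FBot
      | _, FBot => FBot
      | FImp FBot FBot, _ => b
      | _, FImp FBot FBot => a
      | _, _ => FAnd a b
      end
  | FOr G H =>
      let a := simp G in let b := simp H in
      match a, b with
      | FBot, _ => b
      | _, FBot => a
      | FImp FBot FBot, _ => FTop
      | _, FImp FBot FBot => FTop
      | _, _ => FOr a b
      end
  | FImp G H =>
      let a := simp G in let b := simp H in
      match a, b with
      | FBot, _ => FTop                  (* bot -> G  ~> top ; also not-bot ~> top *)
      | _, FImp FBot FBot => FTop
      | FImp FBot FBot, _ => b           (* top -> G  ~> G ; also not-top ~> bot *)
      | _, _ => FImp a b
      end
  | FQ q y G => FQ q y (simp G)
  | _ => G
  end.

Definition pos_weakly_restricted (x : nat) (G : formula) : Prop :=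
  simp (repl x G) = FTop.
Definition neg_weakly_restricted (x : nat) (G : formula) : Prop :=
  simp (repl x G) = FBot.

(** Positions of subformula occurrences: paths from the root. *)
Inductive dir : Type := DL | DR | DQ.

Fixpoint subf_at (F : formula) (p : list dir) : option formula :=
  match p, F with
  | [], _ => Some F
  | DL :: p', (FAnd G _ | FOr G _ | FImp G _) => subf_at G p'
  | DR :: p', (FAnd _ H | FOr _ H | FImp _ H) => subf_at H p'
  | DQ :: p', FQ _ _ G => subf_at G p'
  | _, _ => None
  end.

Fixpoint ante_count (F : formula) (p : list dir) : nat :=
  match p, F with
  | DL :: p', FImp G _ => S (ante_count G p')
  | DL :: p', (FAnd G _ | FOr G _) => ante_count G p'
  | DR :: p', (FAnd _ H | FOr _ H | FImp _ H) => ante_count H p'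
  | DQ :: p', FQ _ _ G => ante_count G p'
  | _, _ => 0
  end.

Definition atom_vars (A : formula) : option (list nat) :=
  match A with
  | FPred _ ts => Some (flat_map term_vars ts)
  | FEq t1 t2 => Some (term_vars t1 ++ term_vars t2)
  | _ => None
  end.

Definition occurs_at (M : formula) (p : list dir) (x : nat) : Prop :=
  exists A vs, subf_at M p = Some A /\ atom_vars A = Some vs /\ In x vs.

Definition prenex (F : formula) (qs : list (quant * nat)) (M : formula) : Prop :=
  F = fold_right (fun qx G => FQ (fst qx) (snd qx) G) M qs /\
  qfree M /\ NoDup (map snd qs).

Definition semi_safe_prefix (qs : list (quant * nat)) (M : formula) : Prop :=
  forall qx, In qx qs -> forall p, occurs_at M p (snd qx) ->
    ante_count M p = 0 ->
    exists q r G H, p = q ++ r /\ subf_at M q = Some (FImp G H) /\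
                    inRV (snd qx) G.

Definition semi_safe (F : formula) : Prop :=
  sentence F /\ exists qs M, prenex F qs M /\ semi_safe_prefix qs M.

Definition safe (F : formula) : Prop :=
  sentence F /\ exists qs M, prenex F qs M /\ semi_safe_prefix qs M /\
  forall qx, In qx qs -> forall p, occurs_at M p (snd qx) ->
    exists q r G, p = q ++ r /\ subf_at M q = Some G /\
      match fst qx with
      | QAll =>
          (Nat.even (ante_count M q) = true /\ pos_weakly_restricted (snd qx) G) \/
          (Nat.odd (ante_count M q) = true /\ neg_weakly_restricted (snd qx) G)
      | QEx =>
          (Nat.odd (ante_count M q) = true /\ pos_weakly_restricted (snd qx) G) \/
          (Nat.even (ante_count M q) = true /\ neg_weakly_restricted (snd qx) G)
      end.

(* Main.v *)
Require Import Defs.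
From Stdlib Require Import List Arith PeanoNat Bool Classical Setoid.
Import ListNotations.

Lemma eval_term_ext {U} (I : interp U) rho1 rho2 t :
  (forall y, In y (term_vars t) -> rho1 y = rho2 y) -> eval_term I rho1 t = eval_term I rho2 t.
Proof. destruct t; simpl; auto. Qed.

Lemma map_eval_ext {U} (I : interp U) rho1 rho2 ts :
  (forall y, In y (flat_map term_vars ts) -> rho1 y = rho2 y) ->
  map (eval_term I rho1) ts = map (eval_term I rho2) ts.
Proof.
  intro H. apply map_ext_in. intros t Ht. apply eval_term_ext. intros y Hy.
  apply H. apply in_flat_map. eauto.
Qed.

Lemma sat_ext {U} (I : interp U) u G : forall rho1 rho2,
  (forall y, In y (free_vars G) -> rho1 y = rho2 y) ->
  (sat I u rho1 G <-> sat I u rho2 G).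
Proof.
  induction G; intros rho1 rho2 H; simpl in *.
  - tauto.
  - destruct P; rewrite (map_eval_ext I rho1 rho2 ts H); tauto.
  - rewrite (eval_term_ext I rho1 rho2 t1), (eval_term_ext I rho1 rho2 t2); [tauto| |];
    intros y Hy; apply H; apply in_or_app; auto.
  - rewrite (IHG1 rho1 rho2), (IHG2 rho1 rho2); [tauto| |]; intros y Hy; apply H; apply in_or_app; auto.
  - rewrite (IHG1 rho1 rho2), (IHG2 rho1 rho2); [tauto| |]; intros y Hy; apply H; apply in_or_app; auto.
  - rewrite (IHG1 rho1 rho2), (IHG2 rho1 rho2); [tauto| |]; intros y Hy; apply H; apply in_or_app; auto.
  - assert (E: forall d, sat I u (upd rho1 x d) G <-> sat I u (upd rho2 x d) G).
    { intro d. apply IHG. intros y Hy. unfold upd. destruct (Nat.eqb y x) eqn:E; auto.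
      apply H. apply filter_In. split; auto. rewrite E. reflexivity. }
    destruct q.
    + split; intros A d Hd; apply E; auto.
    + split; intros [d [Hd A]]; exists d; split; auto; apply E; auto.
Qed.

Lemma fv_star G y : In y (free_vars (star G)) -> In y (free_vars G).
Proof.
  induction G; simpl; auto.
  - destruct P; simpl; auto.
  - rewrite !in_app_iff; tauto.
  - rewrite !in_app_iff; tauto.
  - rewrite !in_app_iff; tauto.
  - rewrite !filter_In; tauto.
Qed.

Lemma star_fold qs M :
  star (fold_right (fun qx G => FQ (fst qx) (snd qx) G) M qs) =
  fold_right (fun qx G => FQ (fst qx) (snd qx) G) (star M) qs.
Proof. induction qs; simpl; congruence. Qed.

Lemma qfree_star N : qfree N -> qfree (star N).
Proof. induction N; simpl; try tauto. destruct P; simpl; auto. Qed.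

Lemma sat_qfree_ext {U} (I : interp U) X u rho N : qfree N ->
  (sat (extension I X) u rho N <-> sat I u rho N).
Proof.
  induction N; simpl; intros Hq; tauto.
Qed.

Lemma star_plain {U} (I : interp U) u (Hu : forall p xs, u p xs -> rel I p xs) G :
  forall rho, sat I u rho (star G) -> sat I u rho G.
Proof.
  induction G; intros rho; simpl; try (destruct P; simpl; auto; fail); try (intuition eauto; fail).
  destruct q; simpl; firstorder.
Qed.

Definition is_bot f := match f with FBot => true | _ => false end.
Definition is_top f := match f with FImp FBot FBot => true | _ => false end.
Definition sand a b := if is_bot a then FBot else if is_bot b then FBot else
  if is_top a then b else if is_top b then a else FAnd a b.
Definition sor a b := if is_bot a then b else if is_bot b then a else
  if is_top a then FTop else if is_top b then FTop else FOr a b.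
Definition simp_imp a b := if is_bot a then FTop else if is_top b then FTop else
  if is_top a then b else FImp a b.

Ltac shp a a1 a2 := destruct a as [| | |a1 a2|a1 a2|a1 a2|]; [ | | | | | destruct a1; [destruct a2| | | | | | ] | ].

Lemma simp_and G H : simp (FAnd G H) = sand (simp G) (simp H).
Proof. simpl. generalize (simp G) (simp H). intros a b. shp a a1 a2; shp b b1 b2; reflexivity. Qed.
Lemma simp_or G H : simp (FOr G H) = sor (simp G) (simp H).
Proof. simpl. generalize (simp G) (simp H). intros a b. shp a a1 a2; shp b b1 b2; reflexivity. Qed.
Lemma simp_imp_eq G H : simp (FImp G H) = simp_imp (simp G) (simp H).
Proof. simpl. generalize (simp G) (simp H). intros a b. shp a a1 a2; shp b b1 b2; reflexivity. Qed.
Lemma is_bot_true a : is_bot a = true -> a = FBot.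
Proof. destruct a; simpl; congruence. Qed.
Lemma is_top_true a : is_top a = true -> a = FTop.
Proof. destruct a; simpl; try congruence. destruct a1; try congruence; destruct a2; try congruence; reflexivity. Qed.

Lemma simp_sound {U} (I : interp U) u (Hu : forall p xs, u p xs -> rel I p xs) G : forall rho,
  (sat I u rho (simp G) <-> sat I u rho G) /\
  (sat I u rho (star (simp G)) <-> sat I u rho (star G)).
Proof.
  induction G; intros rho; try (simpl; tauto).
  - rewrite simp_and. destruct (IHG1 rho) as [A1 S1]. destruct (IHG2 rho) as [A2 S2].
    pose proof (star_plain I u Hu (simp G1) rho) as P1.
    pose proof (star_plain I u Hu (simp G2) rho) as P2.
    revert A1 S1 A2 S2 P1 P2. generalize (simp G1) (simp G2). intros a b. unfold sand.
    destruct (is_bot a) eqn:Ba; [apply is_bot_true in Ba; subst; simpl; tauto|].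
    destruct (is_bot b) eqn:Bb; [apply is_bot_true in Bb; subst; simpl; tauto|].
    destruct (is_top a) eqn:Ta; [apply is_top_true in Ta; subst; simpl; tauto|].
    destruct (is_top b) eqn:Tb; [apply is_top_true in Tb; subst; simpl; tauto|].
    simpl; tauto.
  - rewrite simp_or. destruct (IHG1 rho) as [A1 S1]. destruct (IHG2 rho) as [A2 S2].
    pose proof (star_plain I u Hu (simp G1) rho) as P1.
    pose proof (star_plain I u Hu (simp G2) rho) as P2.
    revert A1 S1 A2 S2 P1 P2. generalize (simp G1) (simp G2). intros a b. unfold sor.
    destruct (is_bot a) eqn:Ba; [apply is_bot_true in Ba; subst; simpl; tauto|].
    destruct (is_bot b) eqn:Bb; [apply is_bot_true in Bb; subst; simpl; tauto|].
    destruct (is_top a) eqn:Ta; [apply is_top_true in Ta; subst; simpl; tauto|].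
    destruct (is_top b) eqn:Tb; [apply is_top_true in Tb; subst; simpl; tauto|].
    simpl; tauto.
  - rewrite simp_imp_eq. destruct (IHG1 rho) as [A1 S1]. destruct (IHG2 rho) as [A2 S2].
    pose proof (star_plain I u Hu (simp G1) rho) as P1.
    pose proof (star_plain I u Hu (simp G2) rho) as P2.
    pose proof (star_plain I u Hu G2 rho) as Q2.
    revert A1 S1 A2 S2 P1 P2 Q2. generalize (simp G1) (simp G2). intros a b. unfold simp_imp.
    destruct (is_bot a) eqn:Ba; [apply is_bot_true in Ba; subst; simpl; tauto|].
    destruct (is_top b) eqn:Tb; [apply is_top_true in Tb; subst; simpl; tauto|].
    destruct (is_top a) eqn:Ta; [apply is_top_true in Ta; subst; simpl; tauto|].
    simpl; tauto.
  - simpl. destruct q; simpl; split; split; intros H; firstorder.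
Qed.
Lemma in_eval {U} (I : interp U) rho x ts :
  In x (flat_map term_vars ts) -> In (rho x) (map (eval_term I rho) ts).
Proof.
  intro H. apply in_flat_map in H. destruct H as [t [Ht Hx]].
  destruct t; simpl in Hx; [|contradiction]. destruct Hx as [<-|[]].
  change (rho x0) with (eval_term I rho (TVar x0)). apply in_map; auto.
Qed.

Lemma repl_sound {U} (I : interp U) u
  (Hu : forall p xs, u p xs -> rel I p xs)
  (Hrel : forall p xs, rel I p xs -> Forall (dom I) xs)
  (Hcst : forall c, dom I (cst I c)) x rho (Hx : ~ dom I (rho x)) N :
  qfree N ->
  (sat I u rho (repl x N) <-> sat I u rho N) /\
  (sat I u rho (star (repl x N)) <-> sat I u rho (star N)).
Proof.
  induction N; simpl; intros Hq.
  - tauto.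
  - destruct (in_dec Nat.eq_dec x (flat_map term_vars ts)) as [i|i]; [|tauto].
    pose proof (in_eval I rho x ts i) as E.
    assert (K : forall p, ~ rel I p (map (eval_term I rho) ts)).
    { intros p R. apply Hrel in R. rewrite Forall_forall in R. apply Hx, R, E. }
    destruct P; simpl; split; split; try tauto; intro R; eapply K; eauto.
  - destruct t1 as [y|c]; destruct t2 as [z|d]; simpl; try tauto.
    all: match goal with |- context [Nat.eq_dec ?a ?b] => destruct (Nat.eq_dec a b) as [i|i] end; simpl in *; try tauto.
    all: subst; split; split; try tauto; intro E; apply Hx; first [rewrite E | rewrite <- E]; auto.
  - destruct Hq as [H1 H2]. specialize (IHN1 H1). specialize (IHN2 H2). simpl. tauto.
  - destruct Hq as [H1 H2]. specialize (IHN1 H1). specialize (IHN2 H2). simpl. tauto.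
  - destruct Hq as [H1 H2]. specialize (IHN1 H1). specialize (IHN2 H2). simpl. tauto.
  - contradiction.
Qed.

Lemma qfree_repl x N : qfree N -> qfree (repl x N).
Proof.
  induction N; simpl; try tauto.
  - destruct (in_dec Nat.eq_dec x (flat_map term_vars ts)); simpl; auto.
  - destruct t1, t2; simpl; auto.
    all: match goal with |- context [Nat.eq_dec ?a ?b] => destruct (Nat.eq_dec a b) end; simpl; auto.
Qed.

Lemma pos_cov {U} (I : interp U) u
  (Hu : forall p xs, u p xs -> rel I p xs)
  (Hrel : forall p xs, rel I p xs -> Forall (dom I) xs)
  (Hcst : forall c, dom I (cst I c)) x rho (Hx : ~ dom I (rho x)) N :
  qfree N -> pos_weakly_restricted x N -> sat I u rho N /\ sat I u rho (star N).
Proof.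
  intros Hq W. destruct (repl_sound I u Hu Hrel Hcst x rho Hx N Hq) as [A S].
  destruct (simp_sound I u Hu (repl x N) rho) as [A' S'].
  unfold pos_weakly_restricted in W. rewrite W in A', S'. simpl in A', S'. tauto.
Qed.

Lemma neg_cov {U} (I : interp U) u
  (Hu : forall p xs, u p xs -> rel I p xs)
  (Hrel : forall p xs, rel I p xs -> Forall (dom I) xs)
  (Hcst : forall c, dom I (cst I c)) x rho (Hx : ~ dom I (rho x)) N :
  qfree N -> neg_weakly_restricted x N -> ~ sat I u rho N /\ ~ sat I u rho (star N).
Proof.
  intros Hq W. destruct (repl_sound I u Hu Hrel Hcst x rho Hx N Hq) as [A S].
  destruct (simp_sound I u Hu (repl x N) rho) as [A' S'].
  unfold neg_weakly_restricted in W. rewrite W in A', S'. simpl in A', S'. tauto.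
Qed.
Definition cond (b : quant) (n : nat) (x : nat) (G : formula) : Prop :=
  match b with
  | QAll => (Nat.even n = true /\ pos_weakly_restricted x G) \/
            (Nat.odd n = true /\ neg_weakly_restricted x G)
  | QEx => (Nat.odd n = true /\ pos_weakly_restricted x G) \/
           (Nat.even n = true /\ neg_weakly_restricted x G)
  end.

Definition dirb (b : quant) k := Bool.eqb (match b with QAll => true | QEx => false end) (Nat.even k).
Definition mono (s : bool) (P Q : Prop) := if s then (P -> Q) else (Q -> P).

Definition cover b x N k := forall r, occurs_at N r x ->
  exists r1 r2 G, r = r1 ++ r2 /\ subf_at N r1 = Some G /\ cond b (k + ante_count N r1) x G.

Definition agree_off {U} x (ra rb : nat -> U) := forall y, y <> x -> ra y = rb y.

Lemma dirb_S b k : dirb b (S k) = negb (dirb b k).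
Proof. unfold dirb. rewrite Nat.even_succ. unfold Nat.odd. destruct b, (Nat.even k); reflexivity. Qed.

Lemma subf_nil N : subf_at N [] = Some N.
Proof. destruct N; reflexivity. Qed.
Lemma ante_nil N : ante_count N [] = 0.
Proof. destruct N; reflexivity. Qed.

Lemma cover_child b x N k d C n :
  ~ cond b k x N ->
  (forall r, subf_at N (d :: r) = subf_at C r) ->
  (forall r, ante_count N (d :: r) = n + ante_count C r) ->
  cover b x N k -> cover b x C (k + n).
Proof.
  intros Hn Hs Ha Hc r Hr. destruct Hr as [A [vs [H1 [H2 H3]]]].
  destruct (Hc (d::r)) as [r1 [r2 [G [E [Hs' Hcond]]]]].
  { exists A, vs. rewrite Hs. auto. }
  destruct r1 as [|d' r1'].
  - rewrite subf_nil in Hs'. injection Hs' as <-. rewrite ante_nil in Hcond. rewrite Nat.add_0_r in Hcond. contradiction.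
  - simpl in E. injection E as <- E. exists r1', r2, G. split; [exact E|]. split.
    + rewrite <- Hs; exact Hs'.
    + rewrite Ha, Nat.add_assoc in Hcond. exact Hcond.
Qed.

Lemma atom_nocc b x N k vs : ~ cond b k x N -> cover b x N k -> atom_vars N = Some vs -> ~ In x vs.
Proof.
  intros Hn Hc Ha Hin. destruct (Hc []) as [r1 [r2 [G [E [Hs Hcond]]]]].
  { exists N, vs. rewrite subf_nil. auto. }
  destruct r1; [|discriminate]. rewrite subf_nil in Hs. injection Hs as <-. rewrite ante_nil in Hcond.
  rewrite Nat.add_0_r in Hcond. contradiction.
Qed.

Lemma mono_iff s P Q : (P <-> Q) -> mono s P Q.
Proof. destruct s; simpl; tauto. Qed.


Lemma covered_mono {U} (I : interp U) u
  (Hu : forall p xs, u p xs -> rel I p xs)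
  (Hrel : forall p xs, rel I p xs -> Forall (dom I) xs)
  (Hcst : forall c, dom I (cst I c)) b x N k ra rb :
  ~ dom I (rb x) -> qfree N -> cond b k x N ->
  mono (dirb b k) (sat I u ra N) (sat I u rb N) /\
  mono (dirb b k) (sat I u ra (star N)) (sat I u rb (star N)).
Proof.
  intros Hx Hq Hk. unfold mono, dirb.
  destruct b; simpl in Hk; unfold Nat.odd in Hk; destruct (Nat.even k); simpl in *;
  destruct Hk as [[E W]|[E W]]; try discriminate;
  first [ pose proof (pos_cov I u Hu Hrel Hcst x rb Hx N Hq W)
        | pose proof (neg_cov I u Hu Hrel Hcst x rb Hx N Hq W) ]; tauto.
Qed.

Lemma mono_qf {U} (I : interp U) u
  (Hu : forall p xs, u p xs -> rel I p xs)
  (Hrel : forall p xs, rel I p xs -> Forall (dom I) xs)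
  (Hcst : forall c, dom I (cst I c)) b x ra rb
  (Hag : agree_off x ra rb) (Hx : ~ dom I (rb x)) N : forall k,
  qfree N -> cover b x N k ->
  mono (dirb b k) (sat I u ra N) (sat I u rb N) /\
  mono (dirb b k) (sat I u ra (star N)) (sat I u rb (star N)).
Proof.
  induction N; intros k Hq Hc;
  (match goal with Hc : cover _ _ ?N _ |- _ => destruct (classic (cond b k x N)) as [Hk|Hk] end). all: try (exact (covered_mono I u Hu Hrel Hcst b x _ k ra rb Hx Hq Hk)).
  - simpl. split; apply mono_iff; tauto.
  - assert (Hn : ~ In x (flat_map term_vars ts)) by (eapply atom_nocc; eauto; reflexivity).
    assert (Hfv : forall y, In y (flat_map term_vars ts) -> ra y = rb y).
    { intros y Hy. apply Hag. intro; subst; contradiction. }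
    split; apply mono_iff.
    * apply (sat_ext I u (FPred P ts)). exact Hfv.
    * apply (sat_ext I u (star (FPred P ts))). intros y Hy. apply Hfv, (fv_star (FPred P ts)), Hy.
  - assert (Hn : ~ In x (term_vars t1 ++ term_vars t2)) by (eapply atom_nocc; eauto; reflexivity).
    assert (Hfv : forall y, In y (term_vars t1 ++ term_vars t2) -> ra y = rb y).
    { intros y Hy. apply Hag. intro; subst; contradiction. }
    split; apply mono_iff; apply (sat_ext I u (FEq t1 t2)); exact Hfv.
  - destruct Hq as [Hq1 Hq2].
    assert (C1 := cover_child b x _ k DL N1 0 Hk (fun r => eq_refl) (fun r => eq_refl) Hc).
    assert (C2 := cover_child b x _ k DR N2 0 Hk (fun r => eq_refl) (fun r => eq_refl) Hc).
    rewrite Nat.add_0_r in C1, C2.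
    destruct (IHN1 k Hq1 C1), (IHN2 k Hq2 C2). simpl. unfold mono in *.
    destruct (dirb b k); tauto.
  - destruct Hq as [Hq1 Hq2].
    assert (C1 := cover_child b x _ k DL N1 0 Hk (fun r => eq_refl) (fun r => eq_refl) Hc).
    assert (C2 := cover_child b x _ k DR N2 0 Hk (fun r => eq_refl) (fun r => eq_refl) Hc).
    rewrite Nat.add_0_r in C1, C2.
    destruct (IHN1 k Hq1 C1), (IHN2 k Hq2 C2). simpl. unfold mono in *.
    destruct (dirb b k); tauto.
  - destruct Hq as [Hq1 Hq2].
    assert (C1 := cover_child b x _ k DL N1 1 Hk (fun r => eq_refl) (fun r => eq_refl) Hc).
    assert (C2 := cover_child b x _ k DR N2 0 Hk (fun r => eq_refl) (fun r => eq_refl) Hc).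
    rewrite Nat.add_0_r in C2. rewrite Nat.add_1_r in C1.
    destruct (IHN1 _ Hq1 C1), (IHN2 k Hq2 C2). rewrite dirb_S in *. simpl. unfold mono in *.
    destruct (dirb b k); simpl in *; tauto.
  - contradiction.
Qed.

Lemma mono_prefix {U} (I : interp U) u s x Body :
  (forall ra rb, agree_off x ra rb -> ~ dom I (rb x) -> mono s (sat I u ra Body) (sat I u rb Body)) ->
  forall qs, ~ In x (map snd qs) ->
  forall ra rb, agree_off x ra rb -> ~ dom I (rb x) ->
  mono s (sat I u ra (fold_right (fun qx G => FQ (fst qx) (snd qx) G) Body qs))
         (sat I u rb (fold_right (fun qx G => FQ (fst qx) (snd qx) G) Body qs)).
Proof.
  intros HB qs. induction qs as [|[q y] qs IH]; intros Hn ra rb Hag Hx; simpl in *; auto.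
  assert (Hy : y <> x) by tauto.
  assert (K : forall d, mono s
     (sat I u (upd ra y d) (fold_right (fun qx G => FQ (fst qx) (snd qx) G) Body qs))
     (sat I u (upd rb y d) (fold_right (fun qx G => FQ (fst qx) (snd qx) G) Body qs))).
  { intro d. apply IH; [tauto| |].
    - intros z Hz. unfold upd. destruct (Nat.eqb z y); auto.
    - unfold upd. assert (E : Nat.eqb x y = false) by (apply Nat.eqb_neq; auto). rewrite E. auto. }
  unfold mono in *. destruct q, s; simpl.
  - intros H d Hd. apply (K d). auto.
  - intros H d Hd. apply (K d). auto.
  - intros [d [Hd H]]. exists d. split; [exact Hd | apply (K d); exact H].
  - intros [d [Hd H]]. exists d. split; [exact Hd | apply (K d); exact H].
Qed.

Lemma core_prefix {U} (I : interp U) X u Body (HX : forall d, dom I d -> X d) d0 (Hd0 : dom I d0)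
  (HqB : qfree Body) : forall qs, NoDup (map snd qs) ->
  (forall qx, In qx qs -> forall ra rb, agree_off (snd qx) ra rb -> ~ dom I (rb (snd qx)) ->
      mono (dirb (fst qx) 0) (sat I u ra Body) (sat I u rb Body)) ->
  forall rho, sat (extension I X) u rho (fold_right (fun qx G => FQ (fst qx) (snd qx) G) Body qs)
          <-> sat I u rho (fold_right (fun qx G => FQ (fst qx) (snd qx) G) Body qs).
Proof.
  induction qs as [|[b x] qs IH]; intros Hnd Hm rho; simpl.
  - apply sat_qfree_ext; auto.
  - simpl in Hnd. apply NoDup_cons_iff in Hnd. destruct Hnd as [Hnin Hnd].
    assert (IH' := IH Hnd (fun qx H => Hm qx (or_intror H))).
    assert (MP := mono_prefix I u (dirb b 0) x Body (Hm (b, x) (or_introl eq_refl)) qs Hnin).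
    assert (Hag : forall d e, agree_off x (upd rho x d) (upd rho x e)).
    { intros d e z Hz. unfold upd. destruct (Nat.eqb z x) eqn:E; [apply Nat.eqb_eq in E; contradiction|reflexivity]. }
    assert (Hupd : forall e, upd rho x e x = e).
    { intro e. unfold upd. rewrite Nat.eqb_refl. reflexivity. }
    destruct b; simpl in MP |- *.
    + split.
      * intros H d Hd. apply IH'. apply H. apply HX; auto.
      * intros H e He. apply IH'. destruct (classic (dom I e)) as [De|De]; [apply H; auto|].
        apply (MP (upd rho x d0) (upd rho x e)); [apply Hag | rewrite Hupd; auto | apply H; auto].
    + split.
      * intros [e [He H]]. apply IH' in H. destruct (classic (dom I e)) as [De|De]; [exists e; auto|].
        exists d0. split; auto.
        apply (MP (upd rho x d0) (upd rho x e)); [apply Hag | rewrite Hupd; auto | exact H].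
      * intros [d [Hd H]]. exists d. split; [apply HX; auto|]. apply IH'. auto.
Qed.

Lemma holds_core {U} (I : interp U) X u G (d0 : U) (Hd0 : dom I d0) :
  (forall d, dom I d -> X d) -> (forall y, ~ In y (free_vars G)) ->
  (forall rho, sat (extension I X) u rho G <-> sat I u rho G) ->
  (holds (extension I X) u G <-> holds I u G).
Proof.
  intros HX Hfv Heq. unfold holds. split.
  - intros H rho Hrho. apply Heq. apply H. intro n. simpl. apply HX, Hrho.
  - intros H rho Hrho. apply Heq. apply (sat_ext I u G (fun _ => d0) rho).
    + intros y Hy. exfalso. exact (Hfv y Hy).
    + apply H. intro; exact Hd0.
Qed.

Lemma u_agree {U} (J : interp U) u u' G : wf_formula G ->
  (forall p, In p (preds G) -> forall xs, u p xs <-> u' p xs) ->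
  forall rho, (sat J u rho G <-> sat J u' rho G) /\ (sat J u rho (star G) <-> sat J u' rho (star G)).
Proof.
  induction G; simpl; intros Hw Hp rho.
  - tauto.
  - destruct P; simpl in *; [|contradiction]. split; [tauto|]. apply Hp. left; reflexivity.
  - tauto.
  - destruct Hw as [W1 W2].
    destruct (IHG1 W1 (fun p Hin => Hp p (in_or_app _ _ _ (or_introl Hin))) rho).
    destruct (IHG2 W2 (fun p Hin => Hp p (in_or_app _ _ _ (or_intror Hin))) rho). tauto.
  - destruct Hw as [W1 W2].
    destruct (IHG1 W1 (fun p Hin => Hp p (in_or_app _ _ _ (or_introl Hin))) rho).
    destruct (IHG2 W2 (fun p Hin => Hp p (in_or_app _ _ _ (or_intror Hin))) rho). tauto.
  - destruct Hw as [W1 W2].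
    destruct (IHG1 W1 (fun p Hin => Hp p (in_or_app _ _ _ (or_introl Hin))) rho).
    destruct (IHG2 W2 (fun p Hin => Hp p (in_or_app _ _ _ (or_intror Hin))) rho). tauto.
  - assert (E := fun rho => IHG Hw Hp rho).
    destruct q; simpl; split; split.
    + intros H d Hd. apply (proj1 (E _)). auto.
    + intros H d Hd. apply (proj1 (E _)). auto.
    + intros H d Hd. apply (proj2 (E _)). auto.
    + intros H d Hd. apply (proj2 (E _)). auto.
    + intros [d [Hd H]]. exists d. split; auto. apply (proj1 (E _)). auto.
    + intros [d [Hd H]]. exists d. split; auto. apply (proj1 (E _)). auto.
    + intros [d [Hd H]]. exists d. split; auto. apply (proj2 (E _)). auto.
    + intros [d [Hd H]]. exists d. split; auto. apply (proj2 (E _)). auto.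
Qed.

Lemma holds_agree {U} (J : interp U) u u' F : wf_formula F ->
  (forall p, In p (preds F) -> forall xs, u p xs <-> u' p xs) ->
  holds J u (star F) -> holds J u' (star F).
Proof.
  intros Hw Hp H rho Hr. apply (proj2 (u_agree J u u' F Hw Hp rho)). apply H; auto.
Qed.

Theorem proposition5 :
  forall (F : formula), wf_formula F -> safe F ->
  forall (U : Type) (I : interp U) (X : U -> Prop),
    wf_interp I ->
    (forall d, dom I d -> X d) ->
    (stable_model (extension I X) F <-> stable_model I F).
Proof.
  intros F Hwf Hsafe U I X Hwi HX.
  destruct Hwi as [[d0 Hd0] [Hcst Hrel0]].
  assert (Hrel : forall p xs, rel I p xs -> Forall (dom I) xs) by (intros p xs H; apply (Hrel0 p xs H)).
  destruct Hsafe as [Hsent [qs [M [[HF [HqM Hnd]] [_ Hsc]]]]].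
  assert (Core : forall u, (forall p xs, u p xs -> rel I p xs) ->
    (holds (extension I X) u F <-> holds I u F) /\
    (holds (extension I X) u (star F) <-> holds I u (star F))).
  { intros u Hu.
    assert (Hcov : forall qx, In qx qs -> cover (fst qx) (snd qx) M 0).
    { intros qx H r Hr. exact (Hsc qx H r Hr). }
    assert (HM : forall qx, In qx qs -> forall ra rb, agree_off (snd qx) ra rb -> ~ dom I (rb (snd qx)) ->
      mono (dirb (fst qx) 0) (sat I u ra M) (sat I u rb M) /\
      mono (dirb (fst qx) 0) (sat I u ra (star M)) (sat I u rb (star M))).
    { intros qx H ra rb Hag Hx. exact (mono_qf I u Hu Hrel Hcst (fst qx) (snd qx) ra rb Hag Hx M 0 HqM (Hcov qx H)). }
    split.
    - apply (holds_core I X u F d0 Hd0 HX).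
      + intros y Hy. rewrite Hsent in Hy. exact Hy.
      + intro rho. rewrite HF. apply (core_prefix I X u M HX d0 Hd0); auto.
        intros qx H ra rb Hag Hx. apply (HM qx H ra rb Hag Hx).
    - apply (holds_core I X u (star F) d0 Hd0 HX).
      + intros y Hy. apply fv_star in Hy. rewrite Hsent in Hy. exact Hy.
      + intro rho. rewrite HF, star_fold. apply (core_prefix I X u (star M) HX d0 Hd0); auto.
        * apply qfree_star; auto.
        * intros qx H ra rb Hag Hx. apply (HM qx H ra rb Hag Hx). }
  assert (HF0 := proj1 (Core (fun _ _ => False) (fun p xs f => match f with end))).
  unfold stable_model. split.
  - intros [H1 H2]. split; [apply HF0; exact H1|].
    intros [u [Hut [[Hle Hneq] Hst]]]. apply H2. exists u.
    split; [|split; [split|]].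
    + intros p xs Hx. destruct (Hut p xs Hx) as [L Fa]. split; auto.
      simpl. eapply Forall_impl; [|exact Fa]. auto.
    + intros p Hp xs Ht Hx. exact (Hle p Hp xs (Hut p xs Hx) Hx).
    + intros Heq. apply Hneq. intros p Hp xs Ht. apply Heq; auto.
      destruct Ht as [L Fa]. split; auto. simpl. eapply Forall_impl; [|exact Fa]. auto.
    + set (u0 := fun p xs => u p xs /\ rel I p xs).
      assert (A : forall p, In p (preds F) -> forall xs, u p xs <-> u0 p xs).
      { intros p Hp xs. unfold u0. split; [|tauto]. intro Hx. split; [exact Hx|].
        exact (Hle p Hp xs (Hut p xs Hx) Hx). }
      assert (A' : forall p, In p (preds F) -> forall xs, u0 p xs <-> u p xs).
      { intros p Hp xs. symmetry. apply A; auto. }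
      apply (holds_agree _ u0 u F Hwf A').
      apply (proj2 (Core u0 (fun p xs H => proj2 H))).
      apply (holds_agree _ u u0 F Hwf A). exact Hst.
  - intros [H1 H2]. split; [apply HF0; exact H1|].
    intros [u [Hut [[Hle Hneq] Hst]]]. apply H2.
    set (u1 := fun p xs => u p xs /\ rel I p xs).
    exists u1. split; [|split; [split|]].
    + intros p xs [_ R]. apply Hrel0; auto.
    + intros p Hp xs Ht [_ R]; auto.
    + intros Heq. apply Hneq. intros p Hp xs Ht. split.
      * intro Hx. apply (Hle p Hp xs Ht Hx).
      * intro R. destruct (Heq p Hp xs (Hrel0 p xs R)) as [_ B]. destruct (B R); auto.
    + assert (A : forall p, In p (preds F) -> forall xs, u p xs <-> u1 p xs).
      { intros p Hp xs. unfold u1. split; [|tauto]. intro Hx. split; [exact Hx|].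
        exact (Hle p Hp xs (Hut p xs Hx) Hx). }
      apply (proj2 (Core u1 (fun p xs H => proj2 H))).
      apply (holds_agree _ u u1 F Hwf A). exact Hst.
Qed.
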